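(* Let $\Lambda=\{0,1,3\}\subset\mathbb{Z}$ and let $\mu_\Lambda$ be the probability measure on $\{0,1\}^\Lambda$ giving probability $1/2$ to each of the configurations $(\eta_0,\eta_1,\eta_3)=(1,1,0)$ and $(\eta_0,\eta_1,\eta_3)=(0,0,1)$. Then $\mu_\Lambda$ is LTI, but there is no LTI probability measure on $\{0,1\}^{\{0,1,2,3\}}$ with marginal $\mu_\Lambda$ on $\{0,1\}^\Lambda$; in particular there is no translation invariant probability measure on $\{0,1\}^{\mathbb{Z}}$ with marginal $\mu_\Lambda$.
   Context: A probability measure $\mu_\Lambda$ on $\{0,1\}^\Lambda$, $\Lambda\subset\mathbb{Z}^d$, is LTI if for all subsets $A,A'\subset\Lambda$ with $A'$ a translate of $A$, the marginal on $\{0,1\}^{A'}$ is the translate of the marginal on $\{0,1\}^A$. *)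

(* Defs.v *)
From HB Require Import structures.
From mathcomp Require Import all_boot all_order all_algebra.
Set Implicit Arguments. Unset Strict Implicit. Unset Printing Implicit Defensive.
Import Order.TTheory GRing.Theory Num.Theory.
Local Open Scope ring_scope.

(* A finite set Lambda of Z is given by a duplicate-free list L : seq int;
   its sites are indexed by 'I_(size L), site i sitting at position [pos L i]. *)
Definition site (L : seq int) := 'I_(size L).
Definition pos (L : seq int) (i : site L) : int := nth 0 L i.

Definition conf (L : seq int) := {ffun site L -> bool}.

Definition is_prob (R : realFieldType) (L : seq int) (mu : conf L -> R) : Prop :=
  (forall eta, 0 <= mu eta) /\ \sum_(eta : conf L) mu eta = 1.

Definition marg (R : realFieldType) (L : seq int) (mu : conf L -> R)
  (A : {set site L}) (xi : conf L) : R :=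
  \sum_(eta : conf L | [forall x in A, eta x == xi x]) mu eta.

(* A' = A + t as subsets of Z *)
Definition is_translate (L : seq int) (A A' : {set site L}) (t : int) : Prop :=
  forall z : int,
    (exists2 y, y \in A' & pos y = z) <-> (exists2 x, x \in A & pos x + t = z).

Definition LTI (R : realFieldType) (L : seq int) (mu : conf L -> R) : Prop :=
  forall (A A' : {set site L}) (t : int), is_translate A A' t ->
  forall xi xi' : conf L,
    (forall x y, x \in A -> y \in A' -> pos y = pos x + t -> xi' y = xi x) ->
    marg mu A xi = marg mu A' xi'.

Definition has_marginal (R : realFieldType) (L M : seq int)
  (nu : conf M -> R) (mu : conf L -> R) : Prop :=
  forall (eta : conf M) (xi : conf L),
    (forall (i : site L) (j : site M), pos i = pos j -> xi i = eta j) ->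
    marg nu [set j | pos j \in L] eta = mu xi.

Definition Lam : seq int := [:: 0; 1; 3].
Definition Lam4 : seq int := [:: 0; 1; 2; 3].

Definition c110 : conf Lam := [ffun i : site Lam => nth false [:: true; true; false] (nat_of_ord i)].
Definition c001 : conf Lam := [ffun i : site Lam => nth false [:: false; false; true] (nat_of_ord i)].

Definition muLam (R : realFieldType) (eta : conf Lam) : R :=
  (eta == c110)%:R / 2 + (eta == c001)%:R / 2.

(* Main.v *)
Require Import Defs.
From HB Require Import structures.
From mathcomp Require Import all_boot all_order all_algebra.
Import Order.TTheory GRing.Theory Num.Theory.
Local Open Scope ring_scope.

Lemma posL_inj : forall a b : site Lam, pos a = pos b -> a = b.
Proof. by move=> [[|[|[|//]]] ?] [[|[|[|//]]] ?] //= H; apply: val_inj. Qed.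
Lemma posL4_inj : forall a b : site Lam4, pos a = pos b -> a = b.
Proof. by move=> [[|[|[|[|//]]]] ?] [[|[|[|[|//]]]] ?] //= H; apply: val_inj. Qed.
Lemma diffL : forall a b c d : site Lam,
  pos c - pos a = pos d - pos b -> pos c != pos a -> a = b.
Proof.
move=> [[|[|[|//]]] ?] [[|[|[|//]]] ?] [[|[|[|//]]] ?] [[|[|[|//]]] ?] //= H1 H2;
  by apply: val_inj.
Qed.

Definition i0 : site Lam := @Ordinal 3 0 isT.
Definition i1 : site Lam := @Ordinal 3 1 isT.
Definition i2 : site Lam := @Ordinal 3 2 isT.

Lemma c001N x : c001 x = ~~ c110 x.
Proof. by rewrite !ffunE; case: x => -[|[|[|//]]]. Qed.

Lemma c110E xi : (xi == c110) = [&& xi i0, xi i1 & ~~ xi i2].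
Proof.
apply/eqP/and3P => [-> | [h0 h1 h2]]; first by rewrite !ffunE.
apply/ffunP => -[[|[|[|//]]] Hi]; rewrite ffunE /=.
- by rewrite (_ : Ordinal Hi = i0) //; apply: val_inj.
- by rewrite (_ : Ordinal Hi = i1) //; apply: val_inj.
- by apply/negbTE; rewrite (_ : Ordinal Hi = i2) //; apply: val_inj.
Qed.

Lemma c001E xi : (xi == c001) = [&& ~~ xi i0, ~~ xi i1 & xi i2].
Proof.
apply/eqP/and3P => [-> | [h0 h1 h2]]; first by rewrite !ffunE.
apply/ffunP => -[[|[|[|//]]] Hi]; rewrite ffunE /=.
- by apply/negbTE; rewrite (_ : Ordinal Hi = i0) //; apply: val_inj.
- by apply/negbTE; rewrite (_ : Ordinal Hi = i1) //; apply: val_inj.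
- by rewrite (_ : Ordinal Hi = i2) //; apply: val_inj.
Qed.

Lemma sum_ind (R : realFieldType) L (P : pred (conf L)) (c : conf L) :
  \sum_(eta | P eta) ((eta == c)%:R / 2 : R) = (P c)%:R / 2.
Proof.
case Pc: (P c).
  rewrite (bigD1 c) //= eqxx big1 ?addr0 // => e /andP[_ /negbTE ->].
  by rewrite mul0r.
rewrite big1 ?mul0r // => e Pe; case: eqP => [ec|]; last by rewrite mul0r.
by rewrite ec Pc in Pe.
Qed.

Definition nA (A : {set site Lam}) (xi : conf Lam) : nat :=
  ([forall x in A, c110 x == xi x] + [forall x in A, c001 x == xi x])%N.

Lemma margE (R : realFieldType) A xi : marg (muLam R) A xi = (nA A xi)%:R / 2.
Proof.
rewrite /marg /muLam big_split /=.
rewrite !(@sum_ind R Lam (fun e : conf Lam => [forall x in A, e x == xi x])) /nA natrD mulrDl.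
by congr (_%:R / 2 + _%:R / 2); apply/eq_forallb => x; rewrite eq_sym.
Qed.

Lemma nA1 (A : {set site Lam}) (xi : conf Lam) (x : site Lam) : x \in A -> {in A &, forall a b, a = b} -> nA A xi = 1%N.
Proof.
move=> xA uA.
have E c : [forall y in A, c y == xi y] = (c x == xi x).
  apply/forall_inP/eqP => [h | h y yA]; first exact/eqP/h.
  by rewrite (uA y x yA xA) h.
by rewrite /nA !E c001N; case: (c110 x); case: (xi x).
Qed.

Lemma nA0 (A : {set site Lam}) (xi : conf Lam) : A = set0 -> nA A xi = 2%N.
Proof.
move=> A0.
have E c : [forall y in A, c y == xi y] = true.
  by apply/forall_inP => y; rewrite A0 in_set0.
by rewrite /nA !E.
Qed.

From mathcomp Require Import zify.

Lemma LTI_mu (R : realFieldType) : LTI (muLam R).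
Proof.
move=> A A' t tr xi xi' hc; rewrite !margE; congr (_%:R / 2).
have [t0 | tn0] := eqVneq t 0.
  subst t.
  have AA : A' = A.
    apply/setP => y; apply/idP/idP => yin.
      have [x xA px] := (tr (pos y)).1 (ex_intro2 _ _ y yin erefl).
      by rewrite addr0 in px; rewrite -(posL_inj _ _ px).
    have [y' y'A' py] := (tr (pos y)).2 (ex_intro2 _ _ y yin (addr0 _)).
    by rewrite (posL_inj _ _ py) in y'A'.
  subst A'; rewrite /nA; congr (_ + _)%N; congr (nat_of_bool _); apply: eq_forallb => x;
    case xA: (x \in A) => //=; by rewrite (hc x x xA xA) // addr0.
have uA : {in A &, forall a b, a = b}.
  move=> a b aA bA.
  have [ya yaA pya] := (tr (pos a + t)).2 (ex_intro2 _ _ a aA erefl).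
  have [yb ybA pyb] := (tr (pos b + t)).2 (ex_intro2 _ _ b bA erefl).
  apply: (@diffL a b ya yb); rewrite ?pya ?pyb; first by lia.
  by apply/eqP => h; move/eqP: tn0; lia.
have uA' : {in A' &, forall a b, a = b}.
  move=> a b aA bA.
  have [x1 x1A p1] := (tr (pos a)).1 (ex_intro2 _ _ a aA erefl).
  have [x2 x2A p2] := (tr (pos b)).1 (ex_intro2 _ _ b bA erefl).
  by apply: posL_inj; rewrite -p1 -p2 (uA x1 x2 x1A x2A).
case: (set_0Vmem A) => [A0 | [x xA]].
  rewrite !nA0 //; apply/setP => y; rewrite in_set0; apply/negbTE/negP => yA'.
  have [x xA _] := (tr (pos y)).1 (ex_intro2 _ _ y yA' erefl).
  by rewrite A0 in_set0 in xA.
have [y yA' _] := (tr (pos x + t)).2 (ex_intro2 _ _ x xA erefl).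
by rewrite (nA1 _ _ _ xA uA) (nA1 _ _ _ yA' uA').
Qed.

Lemma prob_mu (R : realFieldType) : is_prob (muLam R).
Proof.
split=> [eta|].
  by rewrite /muLam addr_ge0 // divr_ge0 // ler0n.
rewrite /muLam big_split /= !(@sum_ind R Lam predT) /=.
by rewrite -splitr.
Qed.

Lemma marg_ge (R : realFieldType) L (nu : conf L -> R) A eta :
  (forall e, 0 <= nu e) -> nu eta <= marg nu A eta.
Proof.
move=> nn; rewrite /marg (bigD1 eta) /=; last by apply/forall_inP.
by rewrite lerDl sumr_ge0.
Qed.

Definition j0 : site Lam4 := @Ordinal 4 0 isT.
Definition j1 : site Lam4 := @Ordinal 4 1 isT.
Definition j2 : site Lam4 := @Ordinal 4 2 isT.
Definition j3 : site Lam4 := @Ordinal 4 3 isT.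

Lemma tr_gen (a b c d : site Lam4) (t : int) :
  pos a + t = pos c -> pos b + t = pos d ->
  is_translate [set a; b] [set c; d] t.
Proof.
move=> pa pb z; split=> -[w]; rewrite !inE => /orP[]/eqP-> <-.
- by exists a; rewrite ?inE ?eqxx.
- by exists b; rewrite ?inE ?eqxx ?orbT.
- by exists c; rewrite ?inE ?eqxx.
- by exists d; rewrite ?inE ?eqxx ?orbT.
Qed.

Lemma part3 (R : realFieldType) :
  ~ (exists nu : conf Lam4 -> R,
       is_prob nu /\ LTI nu /\ has_marginal nu (muLam R)).
Proof.
move=> [nu [[nn s1] [lti hm]]].
have Z0 (eta : conf Lam4) : ~~ ([&& eta j0, eta j1 & ~~ eta j3] || [&& ~~ eta j0, ~~ eta j1 & eta j3]) ->
    nu eta = 0.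
  move=> h; apply/eqP; rewrite eq_le nn andbT.
  pose r := [ffun i : site Lam => eta (nth j0 [:: j0; j1; j3] i)].
  have cp : forall (i : site Lam) (j : site Lam4), pos i = pos j -> r i = eta j.
    move=> i j; rewrite ffunE.
    by case: i j => -[|[|[|//]]] Hi [[|[|[|[|//]]]] Hj] //= _; congr (eta _); apply: val_inj.
  apply: le_trans (@marg_ge R _ nu [set j | pos j \in Lam] eta nn) _.
  rewrite (hm eta r cp) /muLam c110E c001E !ffunE /=.
  by move: h; case: (eta j0); case: (eta j1); case: (eta j3) => //= _; rewrite mul0r addr0.
have Zs (ya yb : site Lam4) (t : int) : pos j0 + t = pos ya -> pos j1 + t = pos yb ->
    forall eta : conf Lam4, eta ya != eta yb -> nu eta = 0.
  move=> pa pb eta neq.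
  pose xi : conf Lam4 := [ffun i => if i == j0 then eta ya else eta yb].
  have M0 : marg nu [set j0; j1] xi = 0.
    rewrite /marg big1 // => e /forall_inP h.
    have h0 : e j0 == xi j0 by apply: h; rewrite !inE eqxx.
    have h1 : e j1 == xi j1 by apply: h; rewrite !inE eqxx orbT.
    apply: Z0; move: (eqP h0) (eqP h1); rewrite !ffunE eqxx => -> /= ->.
    by move: neq; case: (eta ya); case: (eta yb).
  have hc : forall x y, x \in [set j0; j1] -> y \in [set ya; yb] ->
      pos y = pos x + t -> eta y = xi x.
    move=> x y; rewrite !inE => /orP[]/eqP-> /orP[]/eqP-> h; rewrite ffunE //=.
    - by move: h; rewrite -pb => /addIr/posL4_inj/(congr1 val).
    - by move: h; rewrite -pa => /addIr/posL4_inj/(congr1 val).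
  have M := lti _ _ _ (tr_gen _ _ _ _ _ pa pb) xi eta hc.
  apply/eqP; rewrite eq_le nn andbT.
  by apply: le_trans (@marg_ge R _ nu [set ya; yb] eta nn) _; rewrite -M M0.
have Z (eta : conf Lam4) : nu eta = 0.
  have Z01 := Zs j0 j1 0 (addr0 _) (addr0 _) eta.
  have Z12 := Zs j1 j2 1 erefl erefl eta.
  have Z23 := Zs j2 j3 2 erefl erefl eta.
  move: (Z0 eta) Z01 Z12 Z23.
  case: (eta j0); case: (eta j1); case: (eta j2); case: (eta j3) => /= h1 h2 h3 h4;
    by [apply: h1 | apply: h2 | apply: h3 | apply: h4].
by move: s1; rewrite big1 // => /eqP; rewrite eq_sym oner_eq0.
Qed.

Theorem mainTheorem11 (R : realFieldType) :
  is_prob (muLam R) /\ LTI (muLam R) /\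
  ~ (exists nu : conf Lam4 -> R,
       is_prob nu /\ LTI nu /\ has_marginal nu (muLam R)).
Proof.
split; first exact: prob_mu.
split; first exact: LTI_mu.
exact: part3.
Qed.
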